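(* Let $d\le p$ be positive integers, let $\mathcal{U}\subset\mathbb{R}^p$ be a nonempty closed convex cone, let $G$ be a real $d\times p$ matrix with $\{Gu:u\in\mathcal{U}\}=\mathbb{R}^d$, and let $\kappa\in\mathbb{R}^p$. Let $\mathcal{U}_1=\{u\in\mathcal{U}:|Gu|=1\}$ and $\mathcal{H}(q)=\sup_{u\in\mathcal{U}_1}\{-Gu\cdot q-\kappa\cdot u\}$, $q\in\mathbb{R}^d$. Suppose that (a) $\{u\in\mathcal{U}:Gu=0\text{ and }\kappa\cdot u\le0\}=\{0\}$, and (b) there exists a unit vector $u_1\in\mathbb{R}^p$ such that $\inf_{u\in\mathcal{U}_1}u_1\cdot u>0$. Then $\inf_{q\in\mathbb{R}^d}\mathcal{H}(q)<0$.
   Context: $|\cdot|$ denotes the Euclidean norm. *)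

(* Defs.v *)
From HB Require Import structures.
From mathcomp Require Import all_boot all_order all_algebra.
From mathcomp Require Import all_classical all_reals all_analysis.
Import numFieldNormedType.Exports.
Set Implicit Arguments. Unset Strict Implicit. Unset Printing Implicit Defensive.
Import Order.TTheory GRing.Theory Num.Theory.
Local Open Scope classical_set_scope.
Local Open Scope ring_scope.

Definition dotv (R : realType) (n : nat) (u v : 'cV[R]_n) : R :=
  \sum_(i < n) u i 0 * v i 0.

Definition enorm (R : realType) (n : nat) (u : 'cV[R]_n) : R :=
  Num.sqrt (dotv u u).

Definition is_cone (R : realType) (n : nat) (U : set 'cV[R]_n) : Prop :=
  forall u (l : R), U u -> 0 <= l -> U (l *: u).

Definition is_convex_set (R : realType) (n : nat) (U : set 'cV[R]_n) : Prop :=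
  forall u v (t : R), U u -> U v -> 0 <= t <= 1 -> U (t *: u + (1 - t) *: v).

Definition U1 (R : realType) (d p : nat) (U : set 'cV[R]_p) (G : 'M[R]_(d, p))
  : set 'cV[R]_p := [set u | U u /\ enorm (G *m u) = 1].

Definition Ham (R : realType) (d p : nat) (U : set 'cV[R]_p) (G : 'M[R]_(d, p))
  (kappa : 'cV[R]_p) (q : 'cV[R]_d) : \bar R :=
  ereal_sup [set ((- dotv (G *m u) q) - dotv kappa u)%:E | u in U1 U G].

(* Main.v *)
Require Import Defs.
From HB Require Import structures.
From mathcomp Require Import all_boot all_order all_algebra.
From mathcomp Require Import all_classical all_reals all_analysis.
From mathcomp Require Import ring lra.
Import numFieldNormedType.Exports.
Import Order.TTheory GRing.Theory Num.Theory.
Local Open Scope classical_set_scope.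
Local Open Scope ring_scope.
Section S.
Variables (R : realType) (p : nat).
Local Notation V := 'cV[R]_p.

Definition lin (f : V -> R) := forall a b u v, f (a *: u + b *: v) = a * f u + b * f v.
Definition supl (C : set V) (k : V -> R) := forall a b u v, C u -> C v -> 0 <= a -> 0 <= b ->
  a * k u + b * k v <= k (a *: u + b *: v).
Definition ccone (C : set V) := forall a b u v, C u -> C v -> 0 <= a -> 0 <= b -> C (a *: u + b *: v).

Lemma lin0 f : lin f -> f 0 = 0.
Proof. move=> lf; have := lf 0 0 0 0; rewrite !scale0r addr0 !mul0r addr0; done. Qed.

Lemma step C f g k (N : R) : ccone C -> lin f -> lin g -> supl C k -> 0 <= N ->
  (forall u, C u -> k u - N * `|g u| <= f u) ->
  exists q, forall u, C u -> k u <= f u + q * g u.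
Proof.
move=> cC lf lg sk N0 H.
pose A := [set (k u - f u) / g u | u in [set u | C u /\ 0 < g u]] `|` [set - N].
have A0 : A !=set0 by exists (- N); right.
have Aub : ubound A N.
  move=> x [[u [Cu gu] <-]|->]; last by lra.
  rewrite ler_pdivrMr //; have := H u Cu; rewrite ger0_norm; [lra|exact: ltW].
have hs : has_sup A by split => //; exists N.
exists (sup A) => u Cu.
have [gp|gn|g0] := ltgtP (g u) 0; last first.
- by have := H u Cu; rewrite g0 normr0 mulr0 subr0 mulr0 addr0.
- have : (k u - f u) / g u <= sup A by apply: sup_upper_bound => //; left; exists u.
  rewrite ler_pdivrMr //; lra.
- have : sup A <= (f u - k u) / (- g u).
    apply: ge_sup => // x [[v [Cv gv] <-]|->].
    + pose w := (- g u) *: v + g v *: u.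
      have Cw : C w by apply: cC => //; lra.
      have gw : g w = 0 by rewrite /w lg; ring.
      have := H w Cw; rewrite gw normr0 mulr0 subr0 /w lf => Hw.
      have := sk (- g u) (g v) v u Cv Cu ltac:(lra) ltac:(lra).
      move=> Hk.
      rewrite ler_pdivrMr // mulrAC ler_pdivlMr; last lra.
      nra.
    + rewrite ler_pdivlMr; last lra.
      have := H u Cu; rewrite ltr0_norm //; lra.
  rewrite ler_pdivlMr; last lra.
  nra.
Qed.

Lemma multi C (g : nat -> V -> R) n : ccone C -> (forall i, lin (g i)) ->
  forall f k (N : R), 0 <= N -> lin f -> supl C k ->
  (forall u, C u -> k u - N * \sum_(i < n) `|g i u| <= f u) ->
  exists q : nat -> R, forall u, C u -> k u <= f u + \sum_(i < n) q i * g i u.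
Proof.
move=> cC lg; elim: n => [|n IH] f k N N0 lf sk H.
  exists (fun _ => 0) => u Cu; have := H u Cu; rewrite !big_ord0; lra.
pose k' u := k u - N * \sum_(i < n) `|g i u|.
have sk' : supl C k'.
  move=> a b u v Cu Cv a0 b0; rewrite /k'.
  have := sk a b u v Cu Cv a0 b0.
  have : \sum_(i < n) `|g i (a *: u + b *: v)| <=
      a * \sum_(i < n) `|g i u| + b * \sum_(i < n) `|g i v|.
    rewrite !mulr_sumr -big_split /=; apply: ler_sum => i _.
    rewrite lg; apply: (le_trans (ler_normD _ _)).
    by rewrite !normrM (ger0_norm a0) (ger0_norm b0).
  nra.
have [qn Hqn] := @step C f (g n) k' N cC lf (lg n) sk' N0 (fun u Cu => ltac:(
  have := H u Cu; rewrite big_ord_recr /= /k'; lra)).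
pose f' u := f u + qn * g n u.
have lf' : lin f'.
  by move=> a b u v; rewrite /f' lf lg; ring.
have [q Hq] := IH f' k N N0 lf' sk (fun u Cu => ltac:(
  have := Hqn u Cu; rewrite /k' /f'; lra)).
exists (fun j => if j == n then qn else q j) => u Cu.
rewrite big_ord_recr /= eqxx.
have -> : \sum_(i < n) (if (widen_ord (leqnSn n) i : nat) == n then qn else q i) * g i u
   = \sum_(i < n) q i * g i u.
  apply: eq_bigr => i _ /=; by rewrite ltn_eqF.
have := Hq u Cu; rewrite /f'; lra.
Qed.
End S.
Arguments lin {R p}. Arguments supl {R p}. Arguments ccone {R p}. Arguments step {R p}. Arguments multi {R p}.
Section T.
Variables (R : realType) (p : nat).
Lemma trmx_cont m n : continuous (fun M : 'M[R]_(m,n) => M^T).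
Proof.
move=> M A /nbhs_ballP [e e0 eA]; apply/nbhs_ballP; exists e => // N [_ MN].
apply: eA; split => // i j; rewrite !mxE; exact: MN.
Qed.
Lemma coord_le m n (M : 'M[R]_(m,n)) i j : `|M i j| <= `|M|.
Proof.
rewrite [leRHS]/Num.Def.normr /= mx_normrE; apply/bigmax_geP; right => /=; exists (i, j) => //.
Qed.
Lemma bS (U : set 'cV[R]_p) : bounded_set [set r : 'rV[R]_p | U r^T /\ `|r| = 1].
Proof.
rewrite /= /bounded_near; near=> M => x [_ xe]; rewrite /= xe; near: M; exact: nbhs_pinfty_ge.
Unshelve. all: by end_near. Qed.
Lemma cS (U : set 'cV[R]_p) : closed U -> closed [set r : 'rV[R]_p | U r^T /\ `|r| = 1].
Proof.
move=> cU.
have -> : [set r : 'rV[R]_p | U r^T /\ `|r| = 1] = (trmx @^-1` U) `&` ((fun r : 'rV[R]_p => `|r|) @^-1` [set 1]) by [].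
apply: closedI; apply: preimage_closed => //.
- by move=> x _; apply: trmx_cont.
- by move=> x _; apply: norm_continuous.
Qed.
Lemma contsum (d : nat) (G : 'M[R]_(d, p)) : continuous (fun u : 'cV[R]_p => \sum_(i < d) `|(G *m u) i 0|).
Proof.
apply: continuous_big => //; first exact: add_continuous.
move=> i _.
have -> : (fun u : 'cV[R]_p => `|(G *m u) i 0|) = (fun u => `|\sum_(j < p) G i j * u j 0|).
  by apply: funext => u; rewrite mxE.
move=> x; apply: continuous_comp; last exact: norm_continuous.
apply: continuous_big => //; first exact: add_continuous.
move=> j _ y; apply: continuousM; first exact: cst_continuous.
exact: coord_continuous.
Qed.
Lemma dotvZ (a : 'cV[R]_p) c u : dotv a (c *: u) = c * dotv a u.
Proof. rewrite /dotv mulr_sumr; apply: eq_bigr => i _; rewrite mxE; ring. Qed.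
Lemma dotv0 (a : 'cV[R]_p) : dotv a 0 = 0.
Proof. by rewrite -(scale0r (0 : 'cV[R]_p)) dotvZ mul0r. Qed.
Lemma dotv_cont (a : 'cV[R]_p) : continuous (dotv a).
Proof.
apply: continuous_big => //; first exact: add_continuous.
move=> j _ y; apply: continuousM; first exact: cst_continuous.
exact: coord_continuous.
Qed.
Lemma dotv_bnd (a : 'cV[R]_p) (r : 'rV[R]_p) : `|r| = 1 -> `|dotv a r^T| <= \sum_(j < p) `|a j 0|.
Proof.
move=> r1; apply: (le_trans (ler_norm_sum _ _ _)); apply: ler_sum => j _.
rewrite normrM mxE; have := @coord_le 1 p r 0 j; rewrite r1 => hj.
have := normr_ge0 (a j 0); nra.
Qed.

Lemma bound (U : set 'cV[R]_p) (h : 'cV[R]_p -> R) (kap l : 'cV[R]_p) :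
 closed U -> (forall u c, U u -> 0 <= c -> U (c *: u)) -> (exists u, U u /\ u != 0) ->
 continuous h -> (forall u, 0 <= h u) -> (forall u c, 0 <= c -> h (c *: u) = c * h u) ->
 (forall u, U u -> h u = 0 -> dotv kap u <= 0 -> u = 0) ->
 exists dl N : R, 0 < dl /\ 0 <= N /\ forall u, U u -> dl * dotv l u - N * h u <= dotv kap u.
Proof.
move=> cU coneU [u0 [Uu0 u00]] ch h0 hZ Hker.
pose S := [set r : 'rV[R]_p | U r^T /\ `|r| = 1].
have normal : forall u, U u -> u != 0 -> S ((`|u^T|^-1 *: u)^T) /\ 0 < `|u^T|.
  move=> u Uu un0.
  have tp : 0 < `|u^T|.
    rewrite normr_gt0; apply: contra un0 => /eqP/(congr1 trmx).
    by rewrite trmxK trmx0 => ->.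
  split => //; split; first by rewrite trmxK; apply: coneU => //; rewrite invr_ge0 ltW.
  by rewrite linearZ /= normrZ ger0_norm ?invr_ge0 ?ltW // mulVf // gt_eqF.
have S0 : S !=set0 by exists ((`|u0^T|^-1 *: u0)^T); case: (normal u0 Uu0 u00).
have cS' : compact S by apply: bounded_closed_compact; [exact: bS|exact: cS].
pose Phi (r : 'rV[R]_p) := Num.max (h r^T) (dotv kap r^T).
have cPhi : {within S, continuous Phi}.
  apply: continuous_subspaceT => r; apply: (@continuous_max _ _ (fun r => h r^T) (fun r => dotv kap r^T)).
  - by apply: continuous_comp; [exact: trmx_cont|exact: ch].
  - by apply: continuous_comp; [exact: trmx_cont|exact: dotv_cont].
have [c Sc cmin] := EVT_min_rV S0 cS' cPhi.
have m0 : 0 < Phi c.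
  rewrite inE in Sc; case: Sc => Uc c1.
  rewrite /Phi.
  case: (ltrP 0 (h c^T)) => [hp|hle]; first by apply: (lt_le_trans hp); rewrite le_max lexx.
  have h0' : h c^T = 0 by apply: le_anti; rewrite hle h0.
  case: (ltrP 0 (dotv kap c^T)) => [kp|kle]; first by apply: (lt_le_trans kp); rewrite le_max lexx orbT.
  have := Hker _ Uc h0' kle => /(congr1 trmx); rewrite trmxK trmx0 => c0.
  by move: c1; rewrite c0 normr0 => /eqP; rewrite eq_sym oner_eq0.
move: (Phi c) m0 cmin => m m0 cmin.
have [L L0 bL] : exists2 L : R, 0 <= L & forall r : 'rV[R]_p, `|r| = 1 -> `|dotv l r^T| <= L.
  by exists (\sum_(j<p) `|l j 0|); [apply: sumr_ge0 => j _|move=> r; exact: dotv_bnd].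
have [K K0 bK] : exists2 K : R, 0 <= K & forall r : 'rV[R]_p, `|r| = 1 -> `|dotv kap r^T| <= K.
  by exists (\sum_(j<p) `|kap j 0|); [apply: sumr_ge0 => j _|move=> r; exact: dotv_bnd].
exists (m / (L+1)), ((K + m)/m); split; first by apply: divr_gt0 => //; lra.
split; first by apply: divr_ge0; lra.
move=> u Uu; case: (eqVneq u 0) => [->|un0].
  have hz : h 0 = 0 by rewrite -(scale0r (0 : 'cV[R]_p)) hZ // mul0r.
  by rewrite !dotv0 hz !mulr0 subr0.
have [Sr tp] := normal u Uu un0.
set t := `|u^T| in Sr tp; set x := t^-1 *: u in Sr.
have Hx : m/(L+1) * dotv l x - (K+m)/m * h x <= dotv kap x.
  have := cmin _ (mem_set Sr); rewrite /Phi trmxK.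
  have bl := bL _ Sr.2; have bk := bK _ Sr.2.
  rewrite trmxK in bl bk.
  move: bl bk; rewrite !ler_norml => /andP [bl1 bl2] /andP [bk1 bk2].
  have hx0 := h0 x.
  have A1 : m/(L+1) * dotv l x <= m.
    rewrite mulrAC ler_pdivrMr; last lra.
    have : m * dotv l x <= m * L by rewrite ler_pM2l.
    nra.
  have A3 : 0 <= (K+m)/m * h x by apply: mulr_ge0 => //; apply: divr_ge0; lra.
  rewrite le_max => /orP [H|H].
  - have A2 : K + m <= (K+m)/m * h x.
      rewrite mulrAC ler_pdivlMr //.
      have : (K + m) * m <= (K + m) * h x by rewrite ler_pM2l //; lra.
      done.
    lra.
  - lra.
move: Hx; rewrite /x !dotvZ hZ; last by rewrite invr_ge0 ltW.
have ti : 0 < t^-1 by rewrite invr_gt0.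
move=> Hx.
have : t^-1 * (m / (L + 1) * dotv l u - (K + m) / m * h u) <= t^-1 * dotv kap u.
  apply: le_trans Hx; rewrite le_eqVlt; apply/orP; left; apply/eqP; ring.
by rewrite ler_pM2l.
Qed.
End T.
Arguments bound {R p}. Arguments contsum {R p d}.

Theorem theorem2p2 (R : realType) (d p : nat) (U : set 'cV[R]_p)
  (G : 'M[R]_(d, p)) (kappa : 'cV[R]_p) :
  (0 < d)%N -> (d <= p)%N ->
  U !=set0 -> closed U -> is_convex_set U -> is_cone U ->
  [set G *m u | u in U] = [set: 'cV[R]_d] ->
  [set u | U u /\ G *m u = 0 /\ dotv kappa u <= 0] = [set 0] ->
  (exists u1 : 'cV[R]_p, enorm u1 = 1 /\
      (0 < ereal_inf [set (dotv u1 u)%:E | u in U1 U G])%E) ->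
  (ereal_inf [set Ham U G kappa q | q in [set: 'cV[R]_d]] < 0)%E.
Proof.
move=> d0 dp [u' Uu'] cU convU coneU surj ker [u1 [nu1 inf0]].
have dotv_lin : forall a : 'cV[R]_p, lin (dotv a).
  move=> a x y u v; rewrite /dotv !mulr_sumr -big_split /=; apply: eq_bigr => i _.
  rewrite !mxE; ring.
have ccU : ccone U.
  move=> a b u v Uu Uv a0 b0.
  have [ab0|abn0] := eqVneq (a + b) 0.
    have a00 : a = 0 by lra.
    have b00 : b = 0 by lra.
    by rewrite a00 b00 !scale0r addr0 -(scale0r u); apply: coneU.
  have abp : 0 < a + b by rewrite lt_def abn0 /=; lra.
  pose t := a / (a + b).
  have t0 : 0 <= t by apply: divr_ge0 => //; lra.
  have t1 : t <= 1 by rewrite ler_pdivrMr //; lra.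
  have -> : a *: u + b *: v = (a + b) *: (t *: u + (1 - t) *: v).
    rewrite scalerDr !scalerA; congr (_ *: _ + _ *: _); rewrite /t; field; exact: abn0.
  apply: coneU; last exact: ltW.
  by apply: convU => //; rewrite t0 t1.
have [u0 [Uu0 u00]] : exists u, U u /\ u != 0.
  have : [set G *m u | u in U] (const_mx 1) by rewrite surj.
  case=> u Uu Gu; exists u; split => //; apply/eqP => u0.
  move: Gu; rewrite u0 mulmx0 => /matrixP /(_ (Ordinal d0) 0); rewrite !mxE => /eqP.
  by rewrite eq_sym oner_eq0.
pose h (u : 'cV[R]_p) := \sum_(i < d) `|(G *m u) i 0|.
have h0 : forall u, 0 <= h u by move=> u; apply: sumr_ge0.
have hZ : forall u c, 0 <= c -> h (c *: u) = c * h u.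
  move=> u c c0; rewrite /h mulr_sumr; apply: eq_bigr => i _.
  by rewrite -scalemxAr mxE normrM ger0_norm.
have Hker : forall u, U u -> h u = 0 -> dotv kappa u <= 0 -> u = 0.
  move=> u Uu hu ku.
  have Gu : G *m u = 0.
    apply/matrixP => i j; rewrite ord1 [RHS]mxE.
    have := @psumr_eq0P _ _ xpredT (fun i => `|(G *m u) i 0|) (fun i _ => normr_ge0 _) hu i isT.
    by move/normr0_eq0.
  have : [set (0 : 'cV[R]_p)] u by rewrite -ker.
  done.
have [dl [N [dl0 [N0 HB]]]] := @bound R p U h kappa u1 cU coneU (ex_intro _ u0 (conj Uu0 u00)) (contsum G) h0 hZ Hker.
pose g (i : nat) (u : 'cV[R]_p) : R := if insub i is Some i' then (G *m u) i' 0 else 0.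
have lg : forall i, lin (g i).
  move=> i a b u v; rewrite /g; case: insub => [i'|]; last by ring.
  by rewrite mulmxDr -!scalemxAr !mxE.
have sk : supl U (fun u => dl * dotv u1 u).
  by move=> a b u v _ _ _ _; rewrite dotv_lin; rewrite le_eqVlt; apply/orP; left; apply/eqP; ring.
have hg : forall u, \sum_(i < d) `|g i u| = h u.
  by move=> u; rewrite /h; apply: eq_bigr => i _; rewrite /g valK.
have [q Hq] := @multi R p U g d ccU lg (dotv kappa) (fun u => dl * dotv u1 u) N N0
  (dotv_lin kappa) sk (fun u Uu => ltac:(rewrite hg; exact: HB)).
pose q' : 'cV[R]_d := \col_i q i.
have hq : forall u, \sum_(i < d) q i * g i u = dotv (G *m u) q'.
  move=> u; rewrite /dotv; apply: eq_bigr => i _; rewrite /g valK [q' _ _]mxE; ring.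
have [c c0 cle] : exists2 c : R, 0 < c & forall u, U1 U G u -> c <= dotv u1 u.
  move: inf0; case E: (ereal_inf _) => [r| |] //.
  - rewrite lte_fin => r0; exists r => // u U1u.
    rewrite -lee_fin -E; apply: ereal_inf_lbound; exists u.
    done. done.
  - move=> _; exists 1 => // u U1u.
    have : (+oo <= (dotv u1 u)%:E)%E by rewrite -E; apply: ereal_inf_lbound; exists u.
    by [].
have Hq' : (Ham U G kappa q' <= (- (dl * c))%:E)%E.
  apply: ge_ereal_sup => _ [u U1u <-]; rewrite lee_fin.
  have [Uu _] := U1u.
  have := Hq u Uu; rewrite hq => H1.
  have := cle u U1u => H2.
  have : dl * c <= dl * dotv u1 u by rewrite ler_pM2l.
  lra.
apply: (le_lt_trans (ereal_inf_lbound _)); first by exists q'.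
apply: (le_lt_trans Hq'); rewrite lte_fin oppr_lt0; exact: mulr_gt0.
Qed.
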